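(* Let $G$ be a connected simple graph with maximum degree at most $3$ and minimum degree at least $2$, in which no two adjacent vertices both have degree $3$. Let $M_1,M_2$ be disjoint matchings of $G$ such that $|M_1\cup M_2|$ is maximum over all pairs of disjoint matchings, and, subject to this, such that $G_{M_1,M_2}$ has the minimum number of connected components. Let $H$ be the graph with vertex set $E(G)\setminus(M_1\cup M_2)$ in which two distinct edges $e_1,e_2$ are adjacent if and only if their distance in $G$ is at most $2$. If $u_1u_2u_3$ and $v_1v_2v_3$ are two distinct components of $G_{M_1,M_2}$ that are paths $P_3$, then $u_1u_2,u_2u_3$ and $v_1v_2,v_2v_3$ do not lie in the same connected component of $H$.
   Context: $G_{M_1,M_2}$ denotes the subgraph of $G$ induced by the edge set $E(G)\setminus(M_1\cup M_2)$. $P_k$ denotes a path on $k$ vertices. The distance between two edges of $G$ is the distance between the corresponding vertices in the line graph of $G$. *)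

(* Defs.v *)
From mathcomp Require Import all_boot.
Set Implicit Arguments. Unset Strict Implicit. Unset Printing Implicit Defensive.

(* A simple graph: vertex finType T, symmetric irreflexive adjacency e.
   Edges are represented as 2-element vertex sets {x,y}. *)
Section Graph.
Variables (T : finType) (e : rel T).

Definition edges : {set {set T}} :=
  [set [set x; y] | x in T, y in T & e x y].

Definition deg (x : T) : nat := #|[set y | e x y]|.

Definition connected_graph : Prop := forall x y : T, connect e x y.

Definition matching (M : {set {set T}}) : Prop :=
  M \subset edges /\
  (forall f g, f \in M -> g \in M -> f != g -> [disjoint f & g]).

Definition rest_edges (M1 M2 : {set {set T}}) : {set {set T}} :=
  edges :\: (M1 :|: M2).

Definition rest_verts (M1 M2 : {set {set T}}) : {set T} :=
  \bigcup_(f in rest_edges M1 M2) f.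

Definition rest_rel (M1 M2 : {set {set T}}) : rel T :=
  fun x y => [set x; y] \in rest_edges M1 M2.

Definition ncomp (M1 M2 : {set {set T}}) : nat :=
  n_comp (connect (rest_rel M1 M2)) (mem (rest_verts M1 M2)).

(* distance in the line graph: adjacent edges share a vertex *)
Definition ledge_adj (f g : {set T}) : bool :=
  [&& f \in edges, g \in edges, f != g & f :&: g != set0].

Definition ldist_le2 (f g : {set T}) : bool :=
  [|| f == g, ledge_adj f g | [exists h, ledge_adj f h && ledge_adj h g]].

Definition Hadj (M1 M2 : {set {set T}}) : rel {set T} :=
  fun f g => [&& f \in rest_edges M1 M2, g \in rest_edges M1 M2,
                 f != g & ldist_le2 f g].

Definition P3_component (M1 M2 : {set {set T}}) (u1 u2 u3 : T) : Prop :=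
  [/\ [&& u1 != u2, u2 != u3 & u1 != u3],
      rest_rel M1 M2 u1 u2, rest_rel M1 M2 u2 u3, ~~ rest_rel M1 M2 u1 u3
    & [set x | connect (rest_rel M1 M2) u1 x] = [set u1; u2; u3]].

End Graph.

(* Main.v *)
Require Import Defs.
From mathcomp Require Import all_boot all_fingroup.
Set Implicit Arguments. Unset Strict Implicit. Unset Printing Implicit Defensive.

Section S.
Variables (T : finType) (e : rel T).
Hypotheses (esym : symmetric e) (eirr : irreflexive e).
Hypothesis degb : forall x, 2 <= deg e x <= 3.
Hypothesis d33 : forall x y, e x y -> ~~ ((deg e x == 3) && (deg e y == 3)).

Notation E := (edges e).

Lemma set2_eq (x y a b : T) : [set x; y] = [set a; b] ->
  (x = a /\ y = b) \/ (x = b /\ y = a).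
Proof.
move=> H.
have ha : a \in [set x; y] by rewrite H !inE eqxx.
have hb : b \in [set x; y] by rewrite H !inE eqxx orbT.
have hx : x \in [set a; b] by rewrite -H !inE eqxx.
have hy : y \in [set a; b] by rewrite -H !inE eqxx orbT.
move: ha hb hx hy; rewrite !inE.
by move=> /orP[]/eqP ha /orP[]/eqP hb /orP[]/eqP hx /orP[]/eqP hy; subst; auto.
Qed.

Lemma edgesP x y : ([set x; y] \in E) = e x y.
Proof.
apply/idP/idP; last first.
  by move=> h; apply/imset2P; exists x y; rewrite ?inE.
case/imset2P=> a b _; rewrite inE => hab /set2_eq [[-> ->]|[-> ->]] //.
by rewrite esym.
Qed.

Lemma edge_at f x : f \in E -> x \in f -> exists y, e x y /\ f = [set x; y].
Proof.
case/imset2P=> a b _; rewrite inE => hab -> ; rewrite !inE => /orP[] /eqP ->.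
  by exists b.
by exists a; rewrite esym setUC.
Qed.

Lemma edge_form f : f \in E -> exists x y, e x y /\ f = [set x; y].
Proof. by case/imset2P=> a b _; rewrite inE => hab ->; exists a, b. Qed.

Lemma edge_neq x y : [set x; y] \in E -> x != y.
Proof. by rewrite edgesP; apply: contraTneq => ->; rewrite eirr. Qed.


Implicit Types (M : {set {set T}}) (f g h : {set T}).

Definition cov (M : {set {set T}}) x := [exists y, [set x; y] \in M].

Lemma covP M x : reflect (exists y, [set x; y] \in M) (cov M x).
Proof. exact: existsP. Qed.

Lemma match_uniq M x y z : matching e M -> [set x; y] \in M -> [set x; z] \in M -> y = z.
Proof.
case=> sub dis hy hz.
case: (eqVneq [set x; y] [set x; z]) => [/set2_eq [[_ ->]|[-> ->]] //|ne].
have := disjointFr (dis _ _ hy hz ne) (_ : x \in [set x; y]).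
by rewrite !inE eqxx /= => /(_ isT).
Qed.

Lemma match_edge M f : matching e M -> f \in M -> f \in E.
Proof. by case=> /subsetP sub _ /sub. Qed.

Lemma match_at M f x : matching e M -> f \in M -> x \in f ->
  exists y, e x y /\ f = [set x; y].
Proof. by move=> hM hf; apply: edge_at; apply: match_edge hM hf. Qed.

Lemma match_cov M f x : matching e M -> f \in M -> x \in f -> cov M x.
Proof. by move=> hM hf hx; have [y [_ def]] := match_at hM hf hx; apply/covP; exists y; rewrite -def. Qed.

Definition sig (M : {set {set T}}) x := odflt x [pick y | [set x; y] \in M].

Lemma sigE M x y : matching e M -> [set x; y] \in M -> sig M x = y.
Proof.
move=> hM h; rewrite /sig; case: pickP => [z hz /=|/(_ y)]; last by rewrite h.
exact: match_uniq hM hz h.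
Qed.

Lemma sigN M x : ~~ cov M x -> sig M x = x.
Proof.
move=> h; rewrite /sig; case: pickP => [z hz /=|//].
by case/negP: h; apply/covP; exists z.
Qed.

Lemma sig_in M x : cov M x -> [set x; sig M x] \in M.
Proof. by case/covP=> y hy; rewrite /sig; case: pickP => [z hz //|/(_ y)]; rewrite hy. Qed.

Lemma sigK M : matching e M -> involutive (sig M).
Proof.
move=> hM x; case: (boolP (cov M x)) => [/sig_in h|h]; last by rewrite !sigN.
by apply: sigE hM _; rewrite setUC.
Qed.

Lemma match_e M x y : matching e M -> [set x; y] \in M -> e x y.
Proof. by move=> hM /(match_edge hM); rewrite edgesP. Qed.

Lemma deg_ge3 x p q r : e x p -> e x q -> e x r -> p != q -> q != r -> p != r ->
  3 <= deg e x.
Proof.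
move=> hp hq hr pq qr pr.
have sub : [set p; q; r] \subset [set y | e x y].
  by apply/subsetP=> y; rewrite !inE => /orP[/orP[]|] /eqP ->.
apply: leq_trans (subset_leq_card sub).
by rewrite (setUC _ [set r]) cardsU1 cards2 !inE negb_or pq eq_sym pr eq_sym qr.
Qed.

Lemma deg_ge4 x p q r s : e x p -> e x q -> e x r -> e x s -> p != q -> q != r -> p != r ->
  s != p -> s != q -> s != r -> 4 <= deg e x.
Proof.
move=> hp hq hr hs pq qr pr sp sq sr.
have sub : [set s; p; q; r] \subset [set y | e x y].
  by apply/subsetP=> y; rewrite !inE => /orP[/orP[/orP[]|]|] /eqP ->.
apply: leq_trans (subset_leq_card sub).
rewrite (setUC _ [set r]) cardsU1 (setUC _ [set q]) cardsU1 cards2 !inE !negb_or.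
by rewrite (eq_sym r q) qr (eq_sym r s) sr (eq_sym r p) pr (eq_sym q s) sq (eq_sym q p) pq sp.
Qed.

Lemma nb2 x p q r : deg e x <= 2 -> e x p -> e x q -> p != q -> e x r -> r = p \/ r = q.
Proof.
move=> hd hp hq pq hr; case: (eqVneq r p); first by left.
case: (eqVneq r q); first by right.
move=> rq rp; have := deg_ge3 hp hq hr pq; rewrite eq_sym rq eq_sym rp.
by move=> /(_ isT isT); rewrite leqNgt ltnS hd.
Qed.

Lemma nb3 x p q r s : deg e x <= 3 -> e x p -> e x q -> e x r -> p != q -> q != r -> p != r ->
  e x s -> [\/ s = p, s = q | s = r].
Proof.
move=> hd hp hq hr pq qr pr hs.
case: (eqVneq s p); first by constructor 1.
case: (eqVneq s q); first by constructor 2.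
case: (eqVneq s r); first by constructor 3.
move=> sr sq sp; have := deg_ge4 hp hq hr hs pq qr pr sp sq sr.
by rewrite leqNgt ltnS hd.
Qed.

Lemma disjP (U : finType) (A B : {set U}) : (forall x, x \in A -> x \in B -> False) -> [disjoint A & B].
Proof.
move=> H; rewrite disjoint_subset; apply/subsetP => x hx; rewrite inE.
by apply/negP => hb; exact: H x hx hb.
Qed.

Lemma matching_sub M M' : M' \subset M -> matching e M -> matching e M'.
Proof.
move=> /subsetP s [/subsetP sub dis]; split; first by apply/subsetP=> f /s /sub.
by move=> f g /s hf /s hg; apply: dis.
Qed.

Lemma matching_add M f : matching e M -> f \in E ->
  (forall x, x \in f -> ~~ cov M x) -> matching e (f |: M).
Proof.
move=> hM hf hc; have [/subsetP sub dis] := hM; split.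
  by apply/subsetP=> g; rewrite !inE => /orP[/eqP ->|/sub].

have key g : g \in M -> [disjoint f & g].
  move=> hg; apply: disjP => x hx hxg.
  by move: (hc x hx); rewrite (match_cov hM hg hxg).
move=> g h; rewrite !inE => /orP[/eqP ->|hg] /orP[/eqP ->|hh] //; first by rewrite eqxx.
- by move=> _; apply: key.
- by move=> _; rewrite disjoint_sym; apply: key.
- by apply: dis.
Qed.

Definition maxcfg M1 M2 := [/\ matching e M1, matching e M2, [disjoint M1 & M2] &
  forall N1 N2, matching e N1 -> matching e N2 -> [disjoint N1 & N2] ->
     #|N1 :|: N2| <= #|M1 :|: M2| ].

Notation R M1 M2 := (rest_edges e M1 M2).

Lemma restP M1 M2 f : (f \in R M1 M2) = [&& f \in E, f \notin M1 & f \notin M2].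
Proof. by rewrite !inE negb_or andbC andbA. Qed.

Lemma restC M1 M2 : R M2 M1 = R M1 M2.
Proof. by rewrite /rest_edges setUC. Qed.

Lemma maxcfgC M1 M2 : maxcfg M1 M2 -> maxcfg M2 M1.
Proof.
case=> h1 h2 d hm; split => //; first by rewrite disjoint_sym.
by move=> N1 N2 n1 n2 dn; rewrite (setUC M2); apply: hm.
Qed.

Lemma maxcfg_eq M1 M2 N1 N2 : maxcfg M1 M2 -> matching e N1 -> matching e N2 ->
  [disjoint N1 & N2] -> #|N1 :|: N2| = #|M1 :|: M2| -> maxcfg N1 N2.
Proof.
case=> _ _ _ hm n1 n2 dn heq; split => // K1 K2 k1 k2 dk.
by rewrite heq; apply: hm.
Qed.

Lemma aug M1 M2 x y : maxcfg M1 M2 -> [set x; y] \in R M1 M2 ->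
  ~~ cov M1 x -> ~~ cov M1 y -> False.
Proof.
move=> [h1 h2 d hm]; rewrite restP => /and3P[he n1 n2] cx cy.
have hN : matching e ([set x; y] |: M1).
  by apply: matching_add => // z; rewrite !inE => /orP[] /eqP ->.
have dN : [disjoint [set x; y] |: M1 & M2].
  apply: disjP => f; rewrite in_setU1 => /orP[/eqP ->|hf] hf2; first by rewrite hf2 in n2.
  by rewrite (disjointFr d hf) in hf2.
have := hm _ _ hN h2 dN; rewrite -setUA cardsU1 !inE negb_or n1 n2 /=.
by rewrite add1n ltnn.
Qed.

Lemma aug2 M1 M2 x y : maxcfg M1 M2 -> [set x; y] \in R M1 M2 ->
  ~~ cov M2 x -> ~~ cov M2 y -> False.
Proof. by move=> /maxcfgC hm; rewrite -restC; apply: aug. Qed.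

Lemma deg_le3 x : deg e x <= 3.
Proof. by case/andP: (degb x). Qed.

Lemma deg_ge2 x : 2 <= deg e x.
Proof. by case/andP: (degb x). Qed.

Lemma disjF M1 M2 f : [disjoint M1 & M2] -> f \in M1 -> f \in M2 = false.
Proof. by move=> d; apply: disjointFr. Qed.

Definition Token M1 M2 x1 x2 x3 :=
  [/\ [&& x1 != x2, x2 != x3 & x1 != x3], [set x1; x2] \in R M1 M2,
      [set x2; x3] \in R M1 M2, deg e x2 = 2 &
      [&& cov M1 x1, cov M2 x1, cov M1 x3 & cov M2 x3]].

Lemma TokenC M1 M2 x1 x2 x3 : Token M1 M2 x1 x2 x3 -> Token M2 M1 x1 x2 x3.
Proof. by case=> h1 h2 h3 h4 /and4P[a b c d]; split; rewrite ?(restC M1 M2) ?a ?b ?c ?d. Qed.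

Lemma Token_rev M1 M2 x1 x2 x3 : Token M1 M2 x1 x2 x3 -> Token M1 M2 x3 x2 x1.
Proof.
case=> /and3P[a b c] h2 h3 h4 /and4P[p q r s]; split; rewrite ?p ?q ?r ?s //.
- by rewrite eq_sym b eq_sym a eq_sym c.
- by rewrite setUC.
- by rewrite setUC.
Qed.

Lemma rest_e M1 M2 x y : [set x; y] \in R M1 M2 -> e x y.
Proof. by rewrite restP edgesP => /andP[]. Qed.

Lemma rest_sym M1 M2 x y : ([set x; y] \in R M1 M2) = ([set y; x] \in R M1 M2).
Proof. by rewrite setUC. Qed.

Lemma end_nbr M1 M2 x1 x2 x3 w : matching e M1 -> matching e M2 -> [disjoint M1 & M2] ->
  Token M1 M2 x1 x2 x3 -> e x1 w ->
  [\/ w = x2, [set x1; w] \in M1 | [set x1; w] \in M2].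
Proof.
move=> h1 h2 d [_ r12 _ _ /and4P[c1 c2 _ _]] hw.
have m1 := sig_in c1; have m2 := sig_in c2.
have e1 := match_e h1 m1; have e2 := match_e h2 m2.
have n1 : x2 != sig M1 x1.
  by apply: contraTneq r12 => ->; rewrite restP m1 andbF.
have n2 : sig M1 x1 != sig M2 x1.
  by apply: contraTneq m2 => <-; rewrite (disjF d m1).
have n3 : x2 != sig M2 x1.
  by apply: contraTneq r12 => ->; rewrite restP m2 !andbF.
case: (nb3 (deg_le3 x1) (rest_e r12) e1 e2 n1 n2 n3 hw) => ->.
- by constructor 1.
- by constructor 2.
- by constructor 3.
Qed.

Lemma end_deg M1 M2 x1 x2 x3 : matching e M1 -> matching e M2 -> [disjoint M1 & M2] ->
  Token M1 M2 x1 x2 x3 -> deg e x1 = 3.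
Proof.
move=> h1 h2 d [_ r12 _ _ /and4P[c1 c2 _ _]].
have m1 := sig_in c1; have m2 := sig_in c2.
have e1 := match_e h1 m1; have e2 := match_e h2 m2.
have n1 : x2 != sig M1 x1.
  by apply: contraTneq r12 => ->; rewrite restP m1 andbF.
have n2 : sig M1 x1 != sig M2 x1.
  by apply: contraTneq m2 => <-; rewrite (disjF d m1).
have n3 : x2 != sig M2 x1.
  by apply: contraTneq r12 => ->; rewrite restP m2 !andbF.
apply/eqP; rewrite eqn_leq deg_le3; exact: deg_ge3 (rest_e r12) e1 e2 n1 n2 n3.
Qed.

Lemma mid_nbr M1 M2 x1 x2 x3 w : Token M1 M2 x1 x2 x3 -> e x2 w -> w = x1 \/ w = x3.
Proof.
case=> /and3P[a b c] r12 r23 d2 _ hw.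
apply: (@nb2 x2 x1 x3 w) => //; first by rewrite d2.
- by rewrite esym (rest_e r12).
- exact: rest_e r23.
Qed.

Lemma mid_uncov1 M1 M2 x1 x2 x3 : matching e M1 -> Token M1 M2 x1 x2 x3 -> ~~ cov M1 x2.
Proof.
move=> h1 tk; have [_ r12 r23 _ _] := tk.
apply/negP => /covP [y hy].
case: (mid_nbr tk (match_e h1 hy)) => ey; subst y.
- by move: r12; rewrite restP setUC hy andbF.
- by move: r23; rewrite restP hy andbF.
Qed.

Lemma mid_uncov2 M1 M2 x1 x2 x3 : matching e M2 -> Token M1 M2 x1 x2 x3 -> ~~ cov M2 x2.
Proof. by move=> h2 /TokenC; apply: mid_uncov1. Qed.

Definition isE (x1 x2 x3 : T) g := (g == [set x1; x2]) || (g == [set x2; x3]).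

Lemma isE_in x1 x2 x3 g z : isE x1 x2 x3 g -> z \in g -> z \in [set x1; x2; x3].
Proof. by case/orP=> /eqP ->; rewrite !inE => /orP[] ->; rewrite ?orbT. Qed.

Lemma touch M1 M2 x1 x2 x3 g z : matching e M1 -> matching e M2 -> [disjoint M1 & M2] ->
  Token M1 M2 x1 x2 x3 -> g \in R M1 M2 -> z \in g -> z \in [set x1; x2; x3] ->
  isE x1 x2 x3 g.
Proof.
move=> h1 h2 d tk hg hz; have hgE : g \in E by move: hg; rewrite restP => /andP[].
have [y [ey defg]] := edge_at hgE hz; subst g.
rewrite /isE !inE => /orP[/orP[]|] /eqP hz'; subst z.
- case: (end_nbr h1 h2 d tk ey) => [->|hm|hm]; first by rewrite eqxx.
  + by move: hg; rewrite restP hm andbF.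
  + by move: hg; rewrite restP hm !andbF.
- by case: (mid_nbr tk ey) => ->; rewrite ?eqxx ?orbT // setUC eqxx.
- case: (end_nbr h1 h2 d (Token_rev tk) ey) => [->|hm|hm].
  + by rewrite setUC eqxx orbT.
  + by move: hg; rewrite restP hm andbF.
  + by move: hg; rewrite restP hm !andbF.
Qed.

Lemma bridge M1 M2 x1 x2 x3 f g : matching e M1 -> matching e M2 -> [disjoint M1 & M2] ->
  Token M1 M2 x1 x2 x3 -> isE x1 x2 x3 f -> ~~ isE x1 x2 x3 g -> Hadj e M1 M2 f g ->
  exists w a b, [/\ w = x1 \/ w = x3, [set w; a] \in M1 \/ [set w; a] \in M2,
     g = [set a; b] & a \notin [set x1; x2; x3]].
Proof.
move=> h1 h2 d tk hf hg /and4P[fR gR fg hd]; move: hd; rewrite /ldist_le2 /ledge_adj.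
have tch h z : h \in R M1 M2 -> z \in h -> z \in [set x1; x2; x3] -> isE x1 x2 x3 h.
  by apply: touch tk.
case/or3P => [/eqP fg'|/and4P[_ _ _ /set0Pn [z]]|/existsP [h /andP[/and4P[_ hE fh /set0Pn [z zfh]] /and4P[_ _ hg' /set0Pn [z' z'hg]]]]].
- by rewrite fg' eqxx in fg.
- rewrite inE => /andP[zf zg]; case/negP: hg; eapply (tch _ _ gR zg).
  exact: isE_in hf zf.
move: zfh z'hg; rewrite !inE => /andP[zf zh] /andP[z'h z'g].
have zU := isE_in hf zf.
have hR : h \notin R M1 M2.
  apply/negP => hR; case/negP: hg; eapply (tch _ _ gR z'g).
  exact: isE_in (tch _ _ hR zh zU) z'h.
have hM : (h \in M1) || (h \in M2) by move: hR; rewrite restP hE /= negb_and !negbK.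
have [a [eza defh]] := edge_at hE zh; subst h.
have zx2 : z != x2.
  apply/negP => /eqP zx; subst z.
  by case/orP: hM => hm; [move: (mid_uncov1 h1 tk)|move: (mid_uncov2 h2 tk)];
     rewrite (match_cov _ hm (_ : x2 \in [set x2; a])) ?inE ?eqxx.
have z'a : z' = a.
  move: z'h; rewrite !inE => /orP[] /eqP ez; last by [].
  by subst z'; case/negP: hg; exact: (tch _ _ gR z'g zU).
subst z'.
have gE : g \in E by move: gR; rewrite restP => /andP[].
have [b [_ defg]] := edge_at gE z'g.
have aU : a \notin [set x1; x2; x3].
  by apply/negP => aU; case/negP: hg; exact: (tch _ _ gR z'g aU).
exists z, a, b; split => //.
- by move: zU zx2; rewrite !inE => /orP[/orP[]|] /eqP ->; rewrite ?eqxx //; auto.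
- by case/orP: hM; auto.
Qed.

Lemma inU3 (x1 x2 x3 z : T) : (z \in [set x1; x2; x3]) = [|| z == x1, z == x2 | z == x3].
Proof. by rewrite !inE orbA. Qed.

Definition swapN M x1 x2 a := [set x1; x2] |: (M :\ [set x1; a]).

Lemma in_swapN M x1 x2 a f :
  (f \in swapN M x1 x2 a) = (f == [set x1; x2]) || (f \in M :\ [set x1; a]).
Proof. by rewrite /swapN in_setU1. Qed.

Lemma step M1 M2 x1 x2 x3 a b : maxcfg M1 M2 -> Token M1 M2 x1 x2 x3 ->
  [set x1; a] \in M1 -> [set a; b] \in R M1 M2 -> a \notin [set x1; x2; x3] ->
  [/\ maxcfg (swapN M1 x1 x2 a) M2, Token (swapN M1 x1 x2 a) M2 b a x1,
     (forall g, g \in R M1 M2 -> ~~ isE x1 x2 x3 g -> g \in R (swapN M1 x1 x2 a) M2),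
     (forall z, z \notin [set x1; x2; x3] -> z != a -> cov (swapN M1 x1 x2 a) z = cov M1 z) &
     b \notin [set x1; x2; x3]].
Proof.
move=> hm tk h1a rab aU; have [m1 m2 d hmax] := hm.
have tk' := tk; case: tk' => /and3P[x12 x23 x13] r12 r23 d2 /and4P[c11 c21 c13 c23].
have ex1a := match_e m1 h1a.
have dx1 := end_deg m1 m2 d tk.
have da : deg e a = 2.
  have : deg e a != 3 by have := d33 ex1a; rewrite dx1 eqxx.
  move: (deg_le3 a) (deg_ge2 a); rewrite leq_eqVlt ltnS => /orP[/eqP -> //|h3] h2 _.
  by apply/eqP; rewrite eqn_leq h3 h2.
have eab := rest_e rab.
move: (aU); rewrite inU3 !negb_or => /and3P[ax1 ax2 ax3].
have bx1 : b != x1.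
  by apply: contraTneq rab => ->; rewrite restP setUC h1a andbF.
have nba z : e a z -> z = x1 \/ z = b.
  move=> hz; apply: (@nb2 a x1 b z) => //; [by rewrite da|by rewrite esym|by rewrite eq_sym].
have au2 : ~~ cov M2 a.
  apply/negP => /covP [z hz]; case: (nba z (match_e m2 hz)) => ez; subst z.
  - by rewrite setUC (disjF d h1a) in hz.
  - by move: rab; rewrite restP hz !andbF.
have bc2 : cov M2 b by apply: contraT => nb; case: (aug2 hm rab au2 nb).
have bx2 : b != x2.
  apply/negP => /eqP eb; subst b.
  have ex2a : e x2 a by rewrite esym.
  by case: (mid_nbr tk ex2a) => ea; [move: ax1|move: ax3]; rewrite ea eqxx.
have bx3 : b != x3.
  apply/negP => /eqP eb; subst b.
  have := touch m1 m2 d tk rab (_ : x3 \in [set a; x3]) (_ : x3 \in [set x1; x2; x3]).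
  rewrite !inE !eqxx !orbT => /(_ isT isT) hE.
  by case/negP: aU; apply: (isE_in hE); rewrite !inE eqxx.
have bU : b \notin [set x1; x2; x3] by rewrite inU3 !negb_or bx1 bx2 bx3.
set h := [set x1; a].
have hx1 z : [set x1; z] \in M1 -> z = a by move=> hz; apply: match_uniq m1 hz h1a.
have x2u1 := mid_uncov1 m1 tk.
set M1' := M1 :\ h.
have m1' : matching e M1' by apply: matching_sub m1; apply: subsetDl.
have covD z : cov M1' z = cov M1 z && (z \notin h).
  apply/idP/idP.
  - case/covP=> y; rewrite !inE => /andP[ne hy].
    rewrite (_ : cov M1 z); last by apply/covP; exists y.
    rewrite /= negb_or; apply/andP; split; apply/negP=> /eqP ez; subst z.
    + by rewrite (hx1 _ hy) eqxx in ne.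
    + have hax : [set a; x1] \in M1 by rewrite setUC.
      by move: ne; rewrite (match_uniq m1 hy hax) setUC eqxx.
  - case/andP=> /covP [y hy] zh; apply/covP; exists y; rewrite !inE hy andbT.
    by apply: contra zh => /eqP <-; rewrite !inE eqxx.
have covN z : cov (swapN M1 x1 x2 a) z = (z \in [set x1; x2]) || cov M1' z.
  apply/idP/idP.
  - case/covP=> y; rewrite in_swapN => /orP[/eqP hz|hy].
    + by case/set2_eq: hz => -[-> _]; rewrite !inE eqxx ?orbT.
    + by rewrite orbC (_ : cov M1' z) //; apply/covP; exists y.
  - case/orP=> [hz|/covP [y hy]]; apply/covP.
    + move: hz; rewrite !inE => /orP[] /eqP ->; [exists x2|exists x1]; rewrite in_swapN ?eqxx //.
      by rewrite setUC eqxx.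
    + by exists y; rewrite in_swapN hy orbT.
have e12 : [set x1; x2] \in E by move: r12; rewrite restP => /andP[].
have mN : matching e (swapN M1 x1 x2 a).
  apply: matching_add m1' e12 _ => z; rewrite !inE => /orP[] /eqP ->; rewrite covD.
  - by rewrite !inE eqxx andbF.
  - by rewrite (negbTE x2u1).
have r12' : [set x1; x2] \notin M1 :|: M2.
  by move: r12; rewrite restP !inE negb_or => /and3P[_ -> ->].
have hF : h \in M1 :|: M2 by rewrite inE h1a.
have hM2 : h \notin M2 by rewrite (disjF d h1a).
have DE : M1' :|: M2 = (M1 :|: M2) :\ h.
  apply/setP => f; rewrite !inE; case: (eqVneq f h) => [->|] //=.
  by rewrite (negbTE hM2).
have cardF : #|M1 :|: M2| = #|(M1 :|: M2) :\ h|.+1 by rewrite (cardsD1 h) hF.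
have dN : [disjoint (swapN M1 x1 x2 a) & M2].
  apply: disjP => f; rewrite in_swapN => /orP[/eqP ->|]; first by move: r12'; rewrite inE negb_or => /andP[_ /negbTE ->].
  by rewrite !inE => /andP[_ /(disjF d) ->].
have cardN : #|(swapN M1 x1 x2 a) :|: M2| = #|M1 :|: M2|.
  rewrite /swapN -setUA DE cardsU1 cardF -add1n; congr (_ + _).
  suff -> : [set x1; x2] \notin (M1 :|: M2) :\ h by [].
  by apply: contra r12'; rewrite in_setD1 => /andP[_].
have bc1 : cov M1 b.
  apply: contraT => nb1; exfalso.
  have eab' : [set a; b] \in E by move: rab; rewrite restP => /andP[].
  have mN' : matching e ([set a; b] |: (swapN M1 x1 x2 a)).
    apply: matching_add mN eab' _ => z; rewrite !inE => /orP[] /eqP ->; rewrite covN covD !inE negb_or.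
    - by rewrite (negbTE ax1) (negbTE ax2) eqxx !andbF.
    - by rewrite (negbTE bx1) (negbTE bx2) (negbTE nb1).
  have dN' : [disjoint [set a; b] |: (swapN M1 x1 x2 a) & M2].
    apply: disjP => f; rewrite in_setU1 => /orP[/eqP ->|hf]; last by apply/negP; rewrite (disjointFr dN hf).
    by move: rab; rewrite restP => /and3P[_ _ /negbTE ->].
  have := hmax _ _ mN' m2 dN'; rewrite -(setUA [set [set a; b]]) cardsU1 cardN.
  suff -> : [set a; b] \notin (swapN M1 x1 x2 a) :|: M2 by rewrite add1n ltnn.
  rewrite in_setU in_swapN in_setD1 !negb_or; move: rab; rewrite restP => /and3P[_ /negbTE -> ->].
  rewrite !andbF !andbT.
  by apply/negP => /eqP /set2_eq [[ea _]|[ea _]]; [move: ax1|move: ax2]; rewrite ea eqxx.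
have eab' : [set a; b] \in E by move: rab; rewrite restP => /andP[].
have ba : b != a by rewrite eq_sym (edge_neq eab').
split.
- exact: maxcfg_eq hm mN m2 dN cardN.
- split.
  + by rewrite ba ax1 bx1.
  + rewrite setUC restP eab' in_setU1 negb_or !inE.
    move: rab; rewrite restP => /and3P[_ /negbTE -> ->]; rewrite !andbF !andbT.
    by apply/negP => /eqP /set2_eq [[ea _]|[ea _]]; [move: ax1|move: ax2]; rewrite ea eqxx.
  + rewrite setUC restP (match_edge m1 h1a) in_setU1 negb_or in_setD1 eqxx hM2 /= andbT.
    by rewrite andbT; apply/negP => /eqP /set2_eq [[_ ea]|[ea _]]; [move: ax2|move: x12]; rewrite ea eqxx.
  + exact: da.
  + apply/and4P; split => //.
    * by rewrite covN covD bc1 !inE negb_or bx1 ba orbT.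
    * by rewrite covN !inE eqxx.
- move=> g; rewrite !restP => /and3P[-> g1 ->] hi; rewrite andbT in_setU1 negb_or in_setD1 (negbTE g1) andbF andbT.
  by move: hi; rewrite /isE negb_or => /andP[].
- move=> z; rewrite inU3 !negb_or => /and3P[zx1 zx2 _] za.
  by rewrite covN covD !inE (negbTE zx1) (negbTE zx2) (negbTE za) andbT.
- exact: bU.
Qed.


Definition StepRes M1 M2 x1 x2 x3 w a b :=
  exists N1 N2, [/\ maxcfg N1 N2, Token N1 N2 b a w,
     (forall g, g \in R M1 M2 -> ~~ isE x1 x2 x3 g -> g \in R N1 N2),
     (forall z, z \notin [set x1; x2; x3] -> z != a -> cov N1 z = cov M1 z /\ cov N2 z = cov M2 z) &
     b \notin [set x1; x2; x3]].

Lemma step1 M1 M2 x1 x2 x3 a b : maxcfg M1 M2 -> Token M1 M2 x1 x2 x3 ->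
  ([set x1; a] \in M1 \/ [set x1; a] \in M2) -> [set a; b] \in R M1 M2 ->
  a \notin [set x1; x2; x3] -> StepRes M1 M2 x1 x2 x3 x1 a b.
Proof.
move=> hm tk [hM|hM] rab aU.
- have [p1 p2 p3 p4 p5] := step hm tk hM rab aU.
  by exists (swapN M1 x1 x2 a), M2; split => // z zU za; split => //; apply: p4.
- have rab' : [set a; b] \in R M2 M1 by rewrite restC.
  have [p1 p2 p3 p4 p5] := step (maxcfgC hm) (TokenC tk) hM rab' aU.
  exists M1, (swapN M2 x1 x2 a); split => //.
  + exact: maxcfgC.
  + exact: TokenC.
  + by move=> g hg hi; rewrite -(restC M1 (swapN M2 x1 x2 a)); apply: p3; rewrite ?(restC M1 M2).
  + by move=> z zU za; split => //; apply: p4.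
Qed.

Lemma isE_rev x1 x2 x3 g : isE x3 x2 x1 g = isE x1 x2 x3 g.
Proof. by rewrite /isE orbC (setUC [set x3]) (setUC [set x2]). Qed.

Lemma set3_rev (x1 x2 x3 : T) : [set x3; x2; x1] = [set x1; x2; x3].
Proof. by apply/setP => z; rewrite !inU3; case: (z == x1); case: (z == x2); case: (z == x3). Qed.

Lemma step_gen M1 M2 x1 x2 x3 w a b : maxcfg M1 M2 -> Token M1 M2 x1 x2 x3 ->
  (w = x1 \/ w = x3) -> ([set w; a] \in M1 \/ [set w; a] \in M2) ->
  [set a; b] \in R M1 M2 -> a \notin [set x1; x2; x3] -> StepRes M1 M2 x1 x2 x3 w a b.
Proof.
move=> hm tk [->|->] hM rab aU; first exact: step1.
have := step1 hm (Token_rev tk) hM rab; rewrite set3_rev => /(_ aU).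
case=> N1 [N2 [p1 p2 p3 p4 p5]]; exists N1, N2; rewrite set3_rev in p4 p5; split => //.
by move=> g hg; rewrite -isE_rev; apply: p3.
Qed.

Lemma path_transfer (U : Type) (P : pred U) (r r' : rel U) x s :
  (forall u v, P u -> P v -> r u v -> r' u v) -> all P (x :: s) -> path r x s -> path r' x s.
Proof.
move=> H; elim: s x => [//|y s IH] x /= /and3P[px py ps] /andP[rxy hp].
by rewrite (H _ _ px py rxy) /= IH //= py.
Qed.

Lemma path_R M1 M2 f p : path (Hadj e M1 M2) f p -> all (fun h => h \in R M1 M2) p.
Proof.
elim: p f => [//|g p IH] f /= /andP[/and4P[_ -> _ _] hp] /=.
exact: IH hp.
Qed.

Lemma Hadj_transfer M1 M2 N1 N2 u v : Hadj e M1 M2 u v -> u \in R N1 N2 -> v \in R N1 N2 ->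
  Hadj e N1 N2 u v.
Proof. by case/and4P=> _ _ uv hd hu hv; rewrite /Hadj hu hv uv hd. Qed.

Lemma mid_in (x1 x2 x3 g : T) : x2 \in [set x1; x2; x3].
Proof. by rewrite inU3 eqxx orbT. Qed.

Lemma isE_mid x1 x2 x3 g : isE x1 x2 x3 g -> x2 \in g.
Proof. by case/orP=> /eqP ->; rewrite !inE eqxx ?orbT. Qed.

Lemma all_R_notE M1 M2 (P : pred {set T}) p : all (fun h => h \in R M1 M2) p -> ~~ has P p ->
  all (fun h => (h \in R M1 M2) && ~~ P h) p.
Proof. by elim: p => [//|u p IH] /= /andP[-> hp] /norP[-> hn] /=; apply: IH. Qed.

Lemma main n : forall M1 M2 x1 x2 x3 y1 y2 y3 f p, size p <= n -> maxcfg M1 M2 ->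
  Token M1 M2 x1 x2 x3 -> Token M1 M2 y1 y2 y3 ->
  [disjoint [set x1; x2; x3] & [set y1; y2; y3]] ->
  isE x1 x2 x3 f -> path (Hadj e M1 M2) f p -> isE y1 y2 y3 (last f p) -> False.
Proof.
have base x1 x2 x3 y1 y2 y3 f : [disjoint [set x1; x2; x3] & [set y1; y2; y3]] ->
    isE x1 x2 x3 f -> isE y1 y2 y3 f -> False.
  move=> dj hf hl; have := disjointFr dj (isE_in hf (isE_mid hf)).
  by rewrite (isE_in hl (isE_mid hf)).
elim: n => [|n IH] M1 M2 x1 x2 x3 y1 y2 y3 f [|g p] hs hm tx ty dj hf hp hl.
- exact: base dj hf hl.
- by [].
- exact: base dj hf hl.
have [m1 m2 d _] := hm.
case: (boolP (has (isE x1 x2 x3) (g :: p))) => [/hasP [f' inp hf']|nh].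
  case/splitPr: inp hp hl hs => p1 p2; rewrite cat_path last_cat /= => /andP[_ /andP[_ hp2]] hl hs.
  apply: (IH M1 M2 x1 x2 x3 y1 y2 y3 f' p2) => //.
  by move: hs; rewrite size_cat /= addnS ltnS; apply: leq_trans; apply: leq_addl.
move: hp => /= /andP[hfg hp].
move: (nh); rewrite /= negb_or => /andP[hg nh'].
have [w [a [b [hw hwa defg aU]]]] := bridge m1 m2 d tx hf hg hfg.
have abR : [set a; b] \in R M1 M2 by rewrite -defg; move: hfg => /and4P[].
have [N1 [N2 [q1 q2 q3 q4 q5]]] := step_gen hm tx hw hwa abR aU.
have dw : deg e w = 3.
  by case: hw => ->; [apply: end_deg m1 m2 d tx|apply: end_deg m1 m2 d (Token_rev tx)].
have ewa : e w a by case: hwa => hh; [apply: match_e m1 hh|apply: match_e m2 hh].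
have aV : a \notin [set y1; y2; y3].
  rewrite inU3; apply/negP => /or3P[] /eqP ay; subst a.
  - by have := d33 ewa; rewrite dw (end_deg m1 m2 d ty) eqxx.
  - case: hwa => hh.
    + by move: (mid_uncov1 m1 ty); rewrite (match_cov m1 hh (_ : y2 \in [set w; y2])) // !inE eqxx orbT.
    + by move: (mid_uncov2 m2 ty); rewrite (match_cov m2 hh (_ : y2 \in [set w; y2])) // !inE eqxx orbT.
  - by have := d33 ewa; rewrite dw (end_deg m1 m2 d (Token_rev ty)) eqxx.
have wX : w \in [set x1; x2; x3] by case: hw => ->; rewrite inU3 eqxx ?orbT.
have yX y : y \in [set y1; y2; y3] -> y \notin [set x1; x2; x3].
  by move=> hy; apply/negP => hx; rewrite (disjointFr dj hx) in hy.
have nEx h y : y \in h -> y \in [set y1; y2; y3] -> ~~ isE x1 x2 x3 h.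
  by move=> yh yY; apply/negP => hi; case/negP: (yX _ yY); apply: isE_in hi yh.
apply: (IH N1 N2 b a w y1 y2 y3 g p) => //.
- have [/and3P[y12 y23 y13] r12 r23 d2 /and4P[c1 c2 c3 c4]] := ty.
  have ha y : y \in [set y1; y2; y3] -> cov N1 y = cov M1 y /\ cov N2 y = cov M2 y.
    move=> hy; apply: q4; first exact: yX.
    by apply: contraNneq aV => <-.
  split => //.
  + by rewrite y12 y23 y13.
  + by apply: q3 r12 _; apply: (nEx _ y1); rewrite ?inE ?eqxx ?inU3 ?eqxx.
  + by apply: q3 r23 _; apply: (nEx _ y2); rewrite ?inE ?eqxx ?orbT ?inU3 ?eqxx ?orbT.
  + have hy1 : y1 \in [set y1; y2; y3] by rewrite inU3 eqxx.
    have hy3 : y3 \in [set y1; y2; y3] by rewrite inU3 eqxx !orbT.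
    have [-> ->] := ha y1 hy1; have [-> ->] := ha y3 hy3.
    by rewrite c1 c2 c3 c4.
- apply: disjP => z; rewrite inU3 => /or3P[] /eqP ->.
  + move=> bY; have : isE y1 y2 y3 [set a; b].
      have bab : b \in [set a; b] by rewrite !inE eqxx orbT.
      exact: (touch m1 m2 d ty abR bab bY).
    have aab : a \in [set a; b] by rewrite !inE eqxx.
    by move=> hi; move: aV; rewrite (isE_in hi aab).
  + by move=> aY; rewrite aY in aV.
  + by move=> wY; move: (yX _ wY); rewrite wX.
- by rewrite defg /isE setUC eqxx.
- have hpR := path_R hp.
  apply: (@path_transfer _ (fun h => (h \in R M1 M2) && ~~ isE x1 x2 x3 h) (Hadj e M1 M2)) hp.
  + move=> u v /andP[uR uE] /andP[vR vE] huv.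
    exact: (Hadj_transfer huv (q3 _ uR uE) (q3 _ vR vE)).
  + rewrite /= (_ : g \in R M1 M2) ?hg /=; last by rewrite defg.
    exact: all_R_notE hpR nh'.
Qed.

Definition swapC M1 M2 (C : {set T}) :=
  [set f in M1 | ~~ (f \subset C)] :|: [set f in M2 | f \subset C].

Lemma swapC_match M1 M2 (C : {set T}) : matching e M1 -> matching e M2 ->
  (forall f t, f \in M1 -> t \in f -> t \in C -> f \subset C) ->
  (forall f t, f \in M2 -> t \in f -> t \in C -> f \subset C) ->
  matching e (swapC M1 M2 C).
Proof.
move=> [/subsetP s1 d1] [/subsetP s2 d2] c1 c2; split.
  by apply/subsetP => f; rewrite !inE => /orP[] /andP[h _]; [apply: s1|apply: s2].
have mixed f g : f \in M1 -> ~~ (f \subset C) -> g \in M2 -> g \subset C -> [disjoint f & g].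
  move=> f1 fC g2 gC; apply: disjP => t tf tg.
  by move: fC; rewrite (c1 f t f1 tf (subsetP gC t tg)).
move=> f g; rewrite !inE => /orP[]/andP[hf fC] /orP[]/andP[hg gC].
- by apply: d1.
- by move=> _; apply: mixed.
- by move=> _; rewrite disjoint_sym; apply: mixed.
- by apply: d2.
Qed.

Lemma kempe M1 M2 x y z : maxcfg M1 M2 -> [set x; y] \in R M1 M2 -> [set y; z] \in R M1 M2 ->
  x != z -> ~~ cov M2 y -> ~~ cov M1 x -> ~~ cov M1 z -> False.
Proof.
move=> hm rxy ryz xz y2 x1 z1; have [m1 m2 d hmax] := hm.
have K1 := sigK m1; have K2 := sigK m2.
have inj_r : injective (fun t => sig M1 (sig M2 t)) := inj_comp (inv_inj K1) (inv_inj K2).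
pose rho := perm inj_r.
have rhoE t : rho t = sig M1 (sig M2 t) by rewrite permE.
pose q t := sig M2 (sig M1 t).
have rq t : rho (q t) = t by rewrite rhoE /q K2 K1.
have qr t : q (rho t) = t by rewrite rhoE /q K1 K2.
have idA i t : sig M1 (iter i rho t) = iter i q (sig M1 t).
  elim: i => [//|i IH]; rewrite !iterS -IH rhoE K1 /q.
  by rewrite K1.
have idB i t : sig M2 (iter i rho t) = iter i q (sig M2 t).
  by elim: i => [//|i IH]; rewrite !iterS -IH rhoE.
have idC i t : iter i rho (iter i q t) = t.
  elim: i t => [//|i IH] t; rewrite iterSr iterS rq; exact: IH.
set C := porbit rho y.
have memC t : reflect (exists k, t = iter k rho y) (t \in C).
  apply: (iffP (porbitP _ _ _)) => -[k ->]; exists k; by rewrite permX.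
set n := #|C|.
have n0 : 0 < n by rewrite lt0n card_porbit_neq0.
have itn : iter n rho y = y by apply: iter_porbit.
have itkn k : iter (k * n) rho y = y.
  by elim: k => [//|k IH]; rewrite mulSn iterD IH itn.
have itmod a : iter a rho y = iter (a %% n) rho y.
  by rewrite {1}(divn_eq a n) addnC iterD itkn.
have modeq a b : iter a rho y = iter b rho y -> a %% n = b %% n.
  rewrite (itmod a) (itmod b) => hab.
  have U := uniq_traject_porbit rho y.
  have ha : a %% n < size (traject rho y n) by rewrite size_traject ltn_pmod.
  have hb : b %% n < size (traject rho y n) by rewrite size_traject ltn_pmod.
  apply/eqP; rewrite -(nth_uniq y ha hb U) !nth_traject ?ltn_pmod //.
  by rewrite hab.
have qC t : t \in C -> q t \in C.
  case/memC => [[|k] ->]; apply/memC.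
  - exists n.-1; rewrite -[in LHS]itn -{1}(prednK n0) iterS qr //.
  - by exists k; rewrite iterS qr.
have qiC i t : t \in C -> iter i q t \in C.
  by move=> tC; elim: i => [//|i IH]; rewrite iterS; apply: qC.
have yC : y \in C := porbit_id rho y.
have s2y : sig M2 y = y := sigN y2.
have s1y : sig M1 y = rho y by rewrite rhoE s2y.
have s1C t : t \in C -> sig M1 t \in C.
  case/memC => k ->; rewrite idA; apply: qiC; rewrite s1y; apply/memC; by exists 1.
have s2C t : t \in C -> sig M2 t \in C.
  by case/memC => k ->; rewrite idB s2y; apply: qiC yC.
have fix1 t : t \in C -> sig M1 t = t -> exists i, t = iter i rho y /\ (i + i) %% n = 1 %% n.
  case/memC => i ->; rewrite idA s1y => h; exists i; split => //.
  by apply: modeq; rewrite iterD -h idC.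
have arith i j : (i + i) %% n = 1 %% n -> (j + j) %% n = 1 %% n -> i %% n = j %% n.
  move=> hi hj.
  have := modnMmr i (j + j) n; rewrite hj modnMmr muln1 => ->.
  have := modnMmr j (i + i) n; rewrite hi modnMmr muln1 => ->.
  by rewrite !mulnDr mulnC.
have notboth : (x \notin C) || (z \notin C).
  rewrite -negb_and; apply/negP => /andP[xC zC].
  have [i [xi hi]] := fix1 x xC (sigN x1).
  have [j [zj hj]] := fix1 z zC (sigN z1).
  by move: xz; rewrite xi zj itmod (itmod j) (arith _ _ hi hj) eqxx.
have cl1 f t : f \in M1 -> t \in f -> t \in C -> f \subset C.
  move=> hf tf tC; have [u [_ deff]] := match_at m1 hf tf.
  have su : sig M1 t = u by apply: (sigE m1); rewrite -deff.
  by rewrite deff; apply/subsetP => v; rewrite !inE => /orP[] /eqP ->; rewrite // -su; apply: s1C.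
have cl2 f t : f \in M2 -> t \in f -> t \in C -> f \subset C.
  move=> hf tf tC; have [u [_ deff]] := match_at m2 hf tf.
  have su : sig M2 t = u by apply: (sigE m2); rewrite -deff.
  by rewrite deff; apply/subsetP => v; rewrite !inE => /orP[] /eqP ->; rewrite // -su; apply: s2C.
have mN1 : matching e (swapC M1 M2 C) by apply: swapC_match.
have mN2 : matching e (swapC M2 M1 C) by apply: swapC_match.
have dN : [disjoint swapC M1 M2 C & swapC M2 M1 C].
  apply: disjP => f; rewrite !inE => /orP[]/andP[hf fC] /orP[]/andP[hf' fC'].
  - by rewrite (disjF d hf) in hf'.
  - by rewrite fC' in fC.
  - by rewrite fC in fC'.
  - by rewrite (disjF d hf') in hf.
have UN : swapC M1 M2 C :|: swapC M2 M1 C = M1 :|: M2.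
  apply/setP => f; rewrite !inE.
  by case: (f \in M1); case: (f \in M2); case: (f \subset C).
have hN : maxcfg (swapC M1 M2 C) (swapC M2 M1 C).
  by apply: maxcfg_eq hm mN1 mN2 dN _; rewrite UN.
have RN : R (swapC M1 M2 C) (swapC M2 M1 C) = R M1 M2 by rewrite /rest_edges UN.
have yN : ~~ cov (swapC M1 M2 C) y.
  apply/negP => /covP [t]; rewrite !inE => /orP[]/andP[ht tC].
  - by move: tC; rewrite (cl1 _ y ht _ yC) // !inE eqxx.
  - by move: y2; rewrite (match_cov m2 ht (_ : y \in [set y; t])) // !inE eqxx.
have wN w : w \notin C -> ~~ cov M1 w -> ~~ cov (swapC M1 M2 C) w.
  move=> wC w1; apply/negP => /covP [t]; rewrite !inE => /orP[]/andP[ht tC].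
  - by move: w1; rewrite (match_cov m1 ht (_ : w \in [set w; t])) // !inE eqxx.
  - by move: wC; rewrite (subsetP tC w) // !inE eqxx.
case/orP: notboth => [xC|zC].
- by apply: (aug hN (_ : [set x; y] \in _) (wN x xC x1) yN); rewrite RN.
- have rzy : [set z; y] \in R M1 M2 by rewrite setUC.
  by apply: (aug hN (_ : [set z; y] \in _) (wN z zC z1) yN); rewrite RN.
Qed.

Lemma caseB M1 M2 u1 u2 u3 x : maxcfg M1 M2 -> [set u1; u2] \in R M1 M2 ->
  [set u2; u3] \in R M1 M2 -> u1 != u3 -> e u2 x -> x != u1 -> x != u3 ->
  [set u2; x] \in M1 -> False.
Proof.
move=> hm r12 r23 n13 ex xu1 xu3 hx; have [m1 m2 d _] := hm.
have e21 : e u2 u1 by rewrite esym; apply: rest_e r12.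
have e23 : e u2 u3 := rest_e r23.
have nb u : e u2 u -> [\/ u = u1, u = u3 | u = x].
  by apply: nb3 => //; [apply: deg_le3|rewrite eq_sym|rewrite eq_sym].
have u2c2 : ~~ cov M2 u2.
  apply/negP => /covP [y hy]; case: (nb y (match_e m2 hy)) => ey; subst y.
  - by move: r12; rewrite restP setUC hy !andbF.
  - by move: r23; rewrite restP hy !andbF.
  - by rewrite (disjF d hx) in hy.
have d2 : deg e u2 = 3.
  by apply/eqP; rewrite eqn_leq deg_le3 (deg_ge3 e21 e23 ex) // eq_sym.
have side u (ru : [set u; u2] \in R M1 M2) : ~~ cov M1 u.
  have eu : e u u2 := rest_e ru.
  have du : deg e u = 2.
    have := d33 eu; rewrite d2 eqxx andbT => hne.
    move: (deg_le3 u) (deg_ge2 u); rewrite leq_eqVlt ltnS => /orP[/eqP h3|h3] h2.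
      by rewrite h3 in hne.
    by apply/eqP; rewrite eqn_leq h3 h2.
  have c2 : cov M2 u by apply: contraT => nc; case: (aug2 hm ru nc u2c2).
  have m2u := sig_in c2; have em := match_e m2 m2u.
  have un : u2 != sig M2 u.
    by apply: contraTneq ru => ->; rewrite restP m2u !andbF.
  apply/negP => /covP [y hy].
  have := @nb2 u u2 (sig M2 u) y; rewrite du => /(_ isT eu em un (match_e m1 hy)) [] ey; subst y.
  - by move: ru; rewrite restP hy andbF.
  - by rewrite (disjF d hy) in m2u.
have r32 : [set u3; u2] \in R M1 M2 by rewrite setUC.
exact: (kempe hm r12 r23 n13 u2c2 (side _ r12) (side _ r32)).
Qed.

Lemma init M1 M2 u1 u2 u3 : maxcfg M1 M2 -> P3_component e M1 M2 u1 u2 u3 ->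
  Token M1 M2 u1 u2 u3.
Proof.
move=> hm [/and3P[n12 n23 n13] r12 r23 nr13 comp]; have [m1 m2 d _] := hm.
rewrite /rest_rel in r12 r23 nr13.
move/setP: comp => comp.
have inC w : connect (rest_rel e M1 M2) u1 w -> [|| w == u1, w == u2 | w == u3].
  by move: (comp w); rewrite !inE orbA => <-.
have c2 : connect (rest_rel e M1 M2) u1 u2 by apply: connect1.
have c3 : connect (rest_rel e M1 M2) u1 u3 by apply: connect_trans c2 (connect1 _).
have nbr s w : connect (rest_rel e M1 M2) u1 s -> [set s; w] \in R M1 M2 ->
    [|| w == u1, w == u2 | w == u3].
  by move=> cs hw; apply: inC; apply: connect_trans cs (connect1 _).
have e21 : e u2 u1 by rewrite esym; apply: rest_e r12.
have e23 : e u2 u3 := rest_e r23.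
have n31 : u3 != u1 by rewrite eq_sym.
have := deg_ge2 u2; rewrite leq_eqVlt => /orP[/eqP d2|h3]; last first.
-
  have : ~~ ([set y | e u2 y] \subset [set u1; u3]).
    apply/negP => /subset_leq_card; rewrite cards2 n13.
    by rewrite -/(deg e u2); move: h3; rewrite ltnNge => /negP.
  case/subsetPn => x; rewrite !inE negb_or => ex /andP[xu1 xu3].
  have exE : [set u2; x] \in E by rewrite edgesP.
  have : [set u2; x] \notin R M1 M2.
    apply/negP => hr; have := nbr u2 x c2 hr.
    by rewrite (negbTE xu1) (negbTE xu3) orbF => /eqP xu2; move: ex; rewrite xu2 eirr.
  rewrite restP exE /= negb_and !negbK => /orP[hx|hx].
  + by case: (caseB hm r12 r23 n13 ex xu1 xu3 hx).
  + by case: (caseB (maxcfgC hm) (_ : [set u1; u2] \in R M2 M1) (_ : [set u2; u3] \in R M2 M1) n13 ex xu1 xu3 hx); rewrite (restC M1 M2).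
-
  have nb u : e u2 u -> u = u1 \/ u = u3.
    by move=> hu; apply: (@nb2 u2 u1 u3 u) => //; rewrite -d2.
  have u2c1 : ~~ cov M1 u2.
    apply/negP => /covP [y hy]; case: (nb y (match_e m1 hy)) => ey; subst y.
    + by move: r12; rewrite restP setUC hy !andbF.
    + by move: r23; rewrite restP hy !andbF.
  have u2c2 : ~~ cov M2 u2.
    apply/negP => /covP [y hy]; case: (nb y (match_e m2 hy)) => ey; subst y.
    + by move: r12; rewrite restP setUC hy !andbF.
    + by move: r23; rewrite restP hy !andbF.
  split => //; first by rewrite n12 n23 n13.
  apply/and4P; split; apply: contraT => nc.
  + by case: (aug hm r12 nc u2c1).
  + by case: (aug2 hm r12 nc u2c2).
  + by case: (aug hm r23 u2c1 nc).
  + by case: (aug2 hm r23 u2c2 nc).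
Qed.

Lemma final M1 M2 u1 u2 u3 v1 v2 v3 :
  matching e M1 -> matching e M2 -> [disjoint M1 & M2] ->
  (forall N1 N2, matching e N1 -> matching e N2 -> [disjoint N1 & N2] ->
     #|N1 :|: N2| <= #|M1 :|: M2|) ->
  P3_component e M1 M2 u1 u2 u3 ->
  P3_component e M1 M2 v1 v2 v3 ->
  [set u1; u2; u3] != [set v1; v2; v3] ->
  ~~ connect (Hadj e M1 M2) [set u1; u2] [set v1; v2]
  /\ ~~ connect (Hadj e M1 M2) [set u2; u3] [set v2; v3]
  /\ ~~ connect (Hadj e M1 M2) [set u1; u2] [set v2; v3]
  /\ ~~ connect (Hadj e M1 M2) [set u2; u3] [set v1; v2].
Proof.
move=> m1 m2 d hmax pu pv neq.
have hm : maxcfg M1 M2 by split.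
have tu := init hm pu; have tv := init hm pv.
have csym : connect_sym (rest_rel e M1 M2).
  by apply: sym_connect_sym => x y; rewrite /rest_rel setUC.
have dj : [disjoint [set u1; u2; u3] & [set v1; v2; v3]].
  apply: disjP => w wU wV.
  case: pu => _ _ _ _ cu; case: pv => _ _ _ _ cv.
  have cuw : connect (rest_rel e M1 M2) u1 w by move/setP: cu => /(_ w); rewrite inE wU.
  have cvw : connect (rest_rel e M1 M2) v1 w by move/setP: cv => /(_ w); rewrite inE wV.
  case/negP: neq; rewrite -cu -cv; apply/eqP/setP => x; rewrite !inE.
  by rewrite (same_connect csym cuw) (same_connect csym cvw).
have key f g : isE u1 u2 u3 f -> isE v1 v2 v3 g -> ~~ connect (Hadj e M1 M2) f g.
  move=> hf hg; apply/negP => /connectP [p hp hl].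
  by apply: (main (leqnn (size p)) hm tu tv dj hf hp); rewrite -hl.
have i1 x y z : isE x y z [set x; y] by rewrite /isE eqxx.
have i2 x y z : isE x y z [set y; z] by rewrite /isE eqxx orbT.
by split; [|split; [|split]]; apply: key.
Qed.

End S.

Theorem lemma3 (T : finType) (e : rel T) (M1 M2 : {set {set T}})
  (u1 u2 u3 v1 v2 v3 : T) :
  symmetric e -> irreflexive e ->
  connected_graph e ->
  (forall x, 2 <= deg e x <= 3) ->
  (forall x y, e x y -> ~~ ((deg e x == 3) && (deg e y == 3))) ->
  matching e M1 -> matching e M2 -> [disjoint M1 & M2] ->
  (forall N1 N2, matching e N1 -> matching e N2 -> [disjoint N1 & N2] ->
     #|N1 :|: N2| <= #|M1 :|: M2|) ->
  (forall N1 N2, matching e N1 -> matching e N2 -> [disjoint N1 & N2] ->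
     #|N1 :|: N2| = #|M1 :|: M2| -> ncomp e M1 M2 <= ncomp e N1 N2) ->
  P3_component e M1 M2 u1 u2 u3 ->
  P3_component e M1 M2 v1 v2 v3 ->
  [set u1; u2; u3] != [set v1; v2; v3] ->
  ~~ connect (Hadj e M1 M2) [set u1; u2] [set v1; v2]
  /\ ~~ connect (Hadj e M1 M2) [set u2; u3] [set v2; v3]
  /\ ~~ connect (Hadj e M1 M2) [set u1; u2] [set v2; v3]
  /\ ~~ connect (Hadj e M1 M2) [set u2; u3] [set v1; v2].
Proof.
move=> esym eirr _ degb d33 m1 m2 d hmax _ pu pv neq.
exact: (final esym eirr degb d33 m1 m2 d hmax pu pv neq).
Qed.
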